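(* Let $n\ge 3$, let $d_1,\dots,d_{n-1}>0$, and let the gains satisfy $$k_1\ge k_2,\qquad k_i\ge k_{i+1}+1\ (i=2,\ldots,n-2),\qquad k_{n-1}\ge 1.$$ Writing $s_i(z)=\mathrm{sgn}(z_i)\,\mathrm{sgn}(|z_i|-d_i)$, consider the system on $\mathbb{R}^{n-1}$ $$\dot z_1=-(k_1+1)s_1(z)+k_2 s_2(z),$$ $$\dot z_i=s_{i-1}(z)-(k_i+1)s_i(z)+k_{i+1}s_{i+1}(z),\quad i=2,\ldots,n-2,$$ $$\dot z_{n-1}=s_{n-2}(z)-(k_{n-1}+1)s_{n-1}(z),$$ with right-hand side denoted $f(z)$. Then every Krasowskii solution $z(t)$ of this system converges, as $t\to\infty$, to (a subset of) the set $$\mathcal{E}=\Big\{z\in\mathbb{R}^{n-1}:\sum_{i=1}^{n-1}|z_i|\,\big||z_i|-d_i\big|=0\Big\},$$ i.e. $\mathrm{dist}(z(t),\mathcal{E})\to 0$.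
   Context: The sign function is $\mathrm{sgn}(z)=+1$ if $z\ge 0$ and $\mathrm{sgn}(z)=-1$ if $z<0$. A Krasowskii solution of $\dot z=f(z)$ is an absolutely continuous function $z(t)$ with $\dot z(t)\in\mathcal{K}(f(z(t)))$ for almost every $t$, where $\mathcal{K}(f(z))=\bigcap_{\delta>0}\overline{\mathrm{co}}\,(f(B(z,\delta)))$, $\overline{\mathrm{co}}$ denoting the closed convex hull and $B(z,\delta)$ the open ball of radius $\delta$ about $z$. The system describes the relative positions $z_i=x_i-x_{i+1}$ of $n$ agents on a line moving under $\dot x_1=-k_1\mathrm{sgn}(x_1-x_2)\mathrm{sgn}(|x_1-x_2|-d_1)$, $\dot x_i=\mathrm{sgn}(x_{i-1}-x_i)\mathrm{sgn}(|x_{i-1}-x_i|-d_{i-1})-k_i\mathrm{sgn}(x_i-x_{i+1})\mathrm{sgn}(|x_i-x_{i+1}|-d_i)$ for $2\le i\le n-1$, $\dot x_n=\mathrm{sgn}(x_{n-1}-x_n)\mathrm{sgn}(|x_{n-1}-x_n|-d_{n-1})$. *)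

(* Defs.v *)
From HB Require Import structures.
From mathcomp Require Import all_boot all_order all_algebra.
From mathcomp Require Import all_classical all_reals all_analysis.
Set Implicit Arguments. Unset Strict Implicit. Unset Printing Implicit Defensive.
Import Order.TTheory GRing.Theory Num.Theory.
Import numFieldNormedType.Exports.
Local Open Scope classical_set_scope.
Local Open Scope ring_scope.

Section Defs.
Variable R : realType.

Definition sgn (x : R) : R := if 0 <= x then 1 else -1.

Definition euclid_dist (m : nat) (x y : 'I_m -> R) : R :=
  Num.sqrt (\sum_(j < m) (x j - y j) ^+ 2).

Definition eball (m : nat) (z : 'I_m -> R) (delta : R) : set ('I_m -> R) :=
  [set y | euclid_dist y z < delta].

Definition conv_hull (m : nat) (A : set ('I_m -> R)) : set ('I_m -> R) :=
  [set x | exists (p : nat) (w : 'I_p -> R) (a : 'I_p -> ('I_m -> R)),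
     (forall i, 0 <= w i) /\ \sum_(i < p) w i = 1 /\ (forall i, A (a i)) /\
     (forall j, x j = \sum_(i < p) w i * a i j)].

Definition eclosure (m : nat) (A : set ('I_m -> R)) : set ('I_m -> R) :=
  [set x | forall e : R, 0 < e -> exists y, A y /\ euclid_dist x y < e].

Definition krasowskii (m : nat) (f : ('I_m -> R) -> ('I_m -> R))
    (z : 'I_m -> R) : set ('I_m -> R) :=
  [set v | forall delta : R, 0 < delta ->
     eclosure (conv_hull (f @` eball z delta)) v].

Definition abs_cont_on (a b : R) (g : R -> R) : Prop :=
  forall e : R, 0 < e -> exists2 delta : R, 0 < delta &
    forall (p : nat) (u v : 'I_p -> R),
      (forall i, a <= u i /\ u i <= v i /\ v i <= b) ->
      (forall i j, i != j -> v i <= u j \/ v j <= u i) ->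
      \sum_(i < p) (v i - u i) < delta ->
      \sum_(i < p) `|g (v i) - g (u i)| < e.

Definition krasowskii_solution (m : nat) (f : ('I_m -> R) -> ('I_m -> R))
    (t0 : R) (z : R -> ('I_m -> R)) : Prop :=
  (forall a b, t0 <= a -> a <= b -> forall j, abs_cont_on a b (fun t => z t j)) /\
  exists N : set R, (@lebesgue_measure R).-negligible N /\
    forall t, t0 < t -> ~ N t ->
      exists v : 'I_m -> R,
        (forall j, is_derive t 1 (fun s => z s j) (v j)) /\
        krasowskii f (z t) v.

(* 1-based access z_i (i = 1..m) to a point z : 'I_m -> R; 0 outside range *)
Definition comp (m : nat) (z : 'I_m -> R) (i : nat) : R :=
  oapp z 0 (insub i.-1).

Definition s_fun (m : nat) (d : nat -> R) (z : 'I_m -> R) (i : nat) : R :=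
  sgn (comp z i) * sgn (`|comp z i| - d i).

Definition rhs (m : nat) (k d : nat -> R) (z : 'I_m -> R) : 'I_m -> R :=
  fun j => let i := j.+1 in
    (if (1 < i)%N then s_fun d z i.-1 else 0)
    - (k i + 1) * s_fun d z i
    + (if (i < m)%N then k i.+1 * s_fun d z i.+1 else 0).

Definition Eset (m : nat) (d : nat -> R) : set ('I_m -> R) :=
  [set z | \sum_(j < m) `|z j| * `| `|z j| - d j.+1 | = 0].

End Defs.

(* Main.v *)
Require Import Defs.
From HB Require Import structures.
From mathcomp Require Import all_boot all_order all_algebra.
From mathcomp Require Import all_classical all_reals all_analysis.
Import Order.TTheory GRing.Theory Num.Theory.
Local Open Scope classical_set_scope.
Local Open Scope ring_scope.
From mathcomp Require Import lra zify.
Set Implicit Arguments. Unset Strict Implicit. Unset Printing Implicit Defensive.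
Import numFieldNormedType.Exports.

Lemma deriv_eps (R : realType) (g : R -> R) (t w : R) : is_derive t (1:R) g w ->
  forall e : R, 0 < e -> exists2 del : R, 0 < del &
   forall h : R, h != 0 -> `|h| < del -> `|g (h + t) - g t - w * h| <= e * `|h|.
Proof.
move=> [dg dv] e e0.
move: dg; rewrite /derivable.
move/cvgrPdist_le.
rewrite /derive in dv. rewrite dv.
move => /(_ e e0).
rewrite near_withinE /= => /nbhs_ballP[del /= del0 Hd].
exists del => // h h0 hd.
have := Hd h.
rewrite /ball /= sub0r normrN => /(_ hd h0) H.
have hA : h%:A = h by rewrite /GRing.scale /= mulr1.
rewrite hA in H.
have -> : g (h + t) - g t - w * h = h * (h^-1 * (g (h + t) - g t) - w).
  by rewrite mulrBr mulrA mulfV // mul1r mulrC.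
by rewrite normrM mulrC ler_wpM2r // distrC.
Qed.

Lemma deriv_eps2 (R : realType) (g : R -> R) (t w : R) : is_derive t (1:R) g w ->
  forall e : R, 0 < e -> exists2 del : R, 0 < del &
   forall x : R, `|x - t| < del -> `|g x - g t - w * (x - t)| <= e * `|x - t|.
Proof.
move=> D e e0; have [del del0 H] := deriv_eps D e0.
exists del => // x xd.
have [->|xt] := eqVneq x t; first by rewrite !subrr mulr0 subrr normr0 mulr0.
have := H (x - t); rewrite subrK; apply => //; by rewrite subr_eq0.
Qed.

Lemma straddle (R : realType) (g : R -> R) (t w : R) : is_derive t (1:R) g w ->
  forall e : R, 0 < e -> exists2 del : R, 0 < del &
   forall u v : R, t - del < u -> u <= t -> t <= v -> v < t + del ->
     `|g v - g u - w * (v - u)| <= e * (v - u).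
Proof.
move=> D e e0; have [del del0 H] := deriv_eps2 D e0.
exists del => // u v h1 h2 h3 h4.
have Hv : `|v - t| < del by rewrite ger0_norm; lra.
have Hu : `|u - t| < del by rewrite ler0_norm; lra.
have := H _ Hv; have := H _ Hu.
rewrite (ger0_norm (x:=v-t)); last lra. rewrite (ler0_norm (x:=u-t)); last lra. move=> A B.
have -> : g v - g u - w * (v - u) = (g v - g t - w * (v - t)) - (g u - g t - w * (u - t)).
  by rewrite mulrBr mulrBr mulrBr; lra.
apply: (le_trans (ler_normB _ _)).
have -> : e * (v - u) = e * (v - t) + e * - (u - t) by rewrite -mulrDr; congr (_ * _); lra.
exact: lerD.
Qed.

Lemma sum_itv_le (R : realType) (U : set R) (p : nat) (u v : nat -> R) :
  open U ->
  (forall i, (i < p)%N -> u i <= v i) ->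
  (forall i j, (i < p)%N -> (j < p)%N -> i <> j -> v i <= u j \/ v j <= u i) ->
  (forall i, (i < p)%N -> forall y, u i < y -> y < v i -> U y) ->
  ((\sum_(i < p) (v i - u i))%:E <= (@lebesgue_measure R) U)%E.
Proof.
move=> oU uv dis sub.
pose F := fun i : 'I_p => [set` `]u i, v i[] : set R.
have mF : forall i, measurable (F i) by move=> i; exact: measurable_itv.
have tF : trivIset setT F.
  move=> i j _ _ [y []] /=.
  rewrite /F /= !in_itv /= => /andP[a1 a2] /andP[b1 b2].
  apply: val_inj; apply: contrapT => ij.
  have [h|h] := dis i j (ltn_ord i) (ltn_ord j) ij.
    by have := lt_trans (lt_le_trans a2 h) b1; rewrite ltxx.
  by have := lt_trans (lt_le_trans b2 h) a1; rewrite ltxx.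
have := @measure_bigsetU_ord _ _ _ (@lebesgue_measure R) p xpredT F mF tF.
rewrite -sumEFin.
have -> : (\sum_(i < p) ((v i - u i)%:E))%E = (\sum_(i < p) (@lebesgue_measure R) (F i))%E.
  apply: eq_bigr => i _; rewrite /F lebesgue_measure_itv /=.
  case: ltP => h; first by rewrite EFinB.
  rewrite lee_fin in h.
  have -> : v i = u i by apply/eqP; rewrite eq_le h uv.
  by rewrite subrr.
move=> <-.
rewrite le_measure ?inE //.
- by apply: bigsetU_measurable => i _; exact: mF.
- exact: measurable_realfun.open_measurable.
elim/big_ind: _ => //.
  by move=> A B hA hB y [/hA|/hB].
move=> i _ y; rewrite /F /= in_itv /= => /andP[h1 h2]; exact: sub h1 h2.
Qed.
Lemma small_open (R : realType) (N : set R) (a b e : R) :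
  (@lebesgue_measure R).-negligible N -> 0 < e ->
  exists U : set R, [/\ open U, N `|` [set a] `|` [set b] `<=` U &
     ((@lebesgue_measure R) U <= e%:E)%E].
Proof.
move=> nN e0.
have nN' : (@lebesgue_measure R).-negligible (N `|` [set a] `|` [set b]).
  apply: negligibleU; first apply: negligibleU => //.
    by exists [set a]; split => //; exact: lebesgue_measure_set1.
  by exists [set b]; split => //; exact: lebesgue_measure_set1.
move/negligible_outer_measure: nN' => H.
have [U [oU sU le]] := outer_measure_open_le (N `|` [set a] `|` [set b]) e0.
by exists U; split => //; rewrite H add0e in le.
Qed.
Definition inv_fam (R : realType) (h : R -> R) (U : set R) (a eps x : R)
  (p : nat) (u v : nat -> R) : Prop :=
  [/\ (forall i, (i < p)%N -> a <= u i /\ u i <= v i /\ v i <= x),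
      (forall i j, (i < p)%N -> (j < p)%N -> i <> j -> v i <= u j \/ v j <= u i),
      (forall i, (i < p)%N -> forall y, u i < y -> y < v i -> U y) &
      h x - h a <= eps * (x - a) + \sum_(i < p) `|h (v i) - h (u i)|].

Lemma inv_good (R : realType) (h : R -> R) U a eps x y p u v :
  0 <= eps -> inv_fam h U a eps x p u v -> x <= y -> h y - h x <= eps * (y - x) ->
  inv_fam h U a eps y p u v.
Proof.
move=> e0 [H1 H2 H3 H4] xy hy; split => //.
  by move=> i ip; have [? [? ?]] := H1 i ip; split => //; split => //; apply: le_trans xy.
have -> : h y - h a = (h y - h x) + (h x - h a) by lra.
have -> : eps * (y - a) = eps * (y - x) + eps * (x - a) by rewrite -mulrDr; congr (_ * _); lra.
move: hy H4; lra.
Qed.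

Lemma inv_bad (R : realType) (h : R -> R) U a eps x y p u v :
  inv_fam h U a eps x p u v -> x <= y -> 0 <= eps -> a <= x ->
  (forall z, x < z -> z < y -> U z) ->
  inv_fam h U a eps y p.+1 (fun i => if i == p then x else u i)
                          (fun i => if i == p then y else v i).
Proof.
move=> [H1 H2 H3 H4] xy e0 ax hU; split.
- move=> i; rewrite ltnS leq_eqVlt => /orP[/eqP ->|ip]; first by rewrite eqxx; lra.
  rewrite (ltn_eqF ip); have [? [? ?]] := H1 i ip; split => //; split => //; lra.
- move=> i j; rewrite ltnS (ltnS j) (leq_eqVlt i) (leq_eqVlt j) => /orP[/eqP ->|ip] /orP[/eqP ->|jp] ij //.
  + rewrite eqxx (ltn_eqF jp); have [? [? ?]] := H1 j jp; right; lra.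
  + rewrite eqxx (ltn_eqF ip); have [? [? ?]] := H1 i ip; left; lra.
  + by rewrite (ltn_eqF ip) (ltn_eqF jp); exact: H2.
- move=> i; rewrite ltnS leq_eqVlt => /orP[/eqP ->|ip]; first by rewrite eqxx.
  by rewrite (ltn_eqF ip); exact: H3.
- rewrite big_ord_recr /= eqxx.
  have -> : \sum_(i < p) `|h (if (widen_ord (leqnSn p) i : nat) == p then y else v (widen_ord (leqnSn p) i)) -
                      h (if (widen_ord (leqnSn p) i : nat) == p then x else u (widen_ord (leqnSn p) i))|
           = \sum_(i < p) `|h (v i) - h (u i)|.
    by apply: eq_bigr => i _; rewrite /= (ltn_eqF (ltn_ord i)).
  have -> : h y - h a = (h y - h x) + (h x - h a) by lra.
  have : h y - h x <= `|h y - h x| by exact: ler_norm.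
  have : eps * (x - a) <= eps * (y - a) by apply: ler_wpM2l => //; lra.
  lra.
Qed.
Lemma core (R : realType) (a b : R) (h : R -> R) (N : set R) :
  a <= b -> abs_cont_on a b h -> (@lebesgue_measure R).-negligible N ->
  (forall t, a < t -> t < b -> ~ N t -> forall e, 0 < e -> exists2 del : R, 0 < del &
      forall u v, t - del < u -> u <= t -> t <= v -> v < t + del -> h v - h u <= e * (v - u)) ->
  h b <= h a.
Proof.
move=> ab hAC nN hloc.
suff H : forall eps, 0 < eps -> h b - h a <= eps * (b - a + 1).
  rewrite -subr_ge0 leNgt; apply/negP => hlt.
  have ba1 : 0 < b - a + 1 by lra.
  have D0 : 0 < h b - h a by lra.
  have := H ((h b - h a) / 2 / (b - a + 1)).
  rewrite divfK ?gt_eqF // => /(_ (divr_gt0 (divr_gt0 D0 (ltr0n R 2)) ba1)).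
  lra.
move=> eps eps0.
have [del0 del00 AC] := hAC eps eps0.
have [U [oU sU mU]] := small_open a b nN (divr_gt0 del00 (ltr0n R 2)).
pose S := [set x | a <= x <= b /\ exists p u v, inv_fam h U a eps x p u v].
have Sa : S a.
  split; first by rewrite lexx ab.
  exists 0%N, (fun=> 0), (fun=> 0); split => // .
  by rewrite big_ord0 !subrr mulr0 addr0.
have hS : has_sup S.
  split; first by exists a.
  by exists b => x [/andP[_ ->]].
pose c := sup S.
have ac : a <= c by exact: sup_upper_bound.
have cb : c <= b by apply: ge_sup; [exists a | move=> x [/andP[_ ->]]].
have [del del0' Hdel] : exists2 del : R, 0 < del &
   ((forall u v, c - del < u -> u <= c -> c <= v -> v < c + del -> h v - h u <= eps * (v - u))
    \/ (forall z, c - del < z -> z < c + del -> U z)).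
  have [g|ng] := pselect (a < c /\ c < b /\ ~ N c).
    case: g => [ac' [cb' nc]]; have [del dp Hd] := hloc c ac' cb' nc eps eps0.
    by exists del => //; left.
  have Uc : U c.
    apply: sU; have [Nc|nNc] := pselect (N c); first by left; left.
    have [ea|nea] := eqVneq c a; first by left; right.
    have [eb|neb] := eqVneq c b; first by right.
    exfalso; apply: ng; split; first by rewrite lt_neqAle eq_sym nea ac.
    by split => //; rewrite lt_neqAle neb cb.
  have := oU c Uc.
  move=> /nbhs_ballP[del dp Hb]; exists del => //; right => z h1 h2.
  apply: Hb; rewrite /ball /= ltr_norml; apply/andP; split; lra.
have [x Sx cx] := sup_adherent del0' hS.
rewrite -/c in cx.
have xc : x <= c by exact: sup_upper_bound.
pose y := Num.min b (c + del / 2).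
have cy : c <= y by rewrite /y le_min cb /=; lra.
have yd : y < c + del by rewrite /y gt_min; apply/orP; right; lra.
have yb : y <= b by rewrite /y ge_min lexx.
have Sy : S y.
  case: Sx => /andP[ax xb] [p [u [v I]]].
  split; first by rewrite yb andbT; lra.
  case: Hdel => [Hd|Hu].
    exists p, u, v; apply: inv_good I _ _ => //; [exact: ltW | lra |].
    apply: Hd => //; lra.
  exists p.+1, (fun i => if i == p then x else u i), (fun i => if i == p then y else v i).
  apply: inv_bad => //; [lra | exact: ltW | move=> z h1 h2; apply: Hu; lra].
have cbe : c = b.
  apply/eqP; rewrite eq_le cb /=; rewrite leNgt; apply/negP => cb'.
  have : y <= c by exact: sup_upper_bound.
  rewrite /y ge_min; case/orP => h1; lra.
have ybe : y = b by apply/eqP; rewrite eq_le yb /=; rewrite -cbe.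
case: Sy => _ [p [u [v [I1 I2 I3 I4]]]].
rewrite ybe in I1 I4.

have uv : forall i, (i < p)%N -> u i <= v i by move=> i ip; have [_ [? _]] := I1 i ip.
have Hs := le_trans (sum_itv_le oU uv I2 I3) mU.
rewrite lee_fin in Hs.
have Hl : \sum_(i < p) `|h (v i) - h (u i)| < eps.
  apply: (AC p (fun i => u i) (fun i => v i)).
  - by move=> i; exact: I1.
  - by move=> i j ij; apply: I2 => // e; move/eqP: ij; apply; exact: val_inj.
  - by apply: le_lt_trans Hs _; lra.
apply: (le_trans I4); have -> : eps * (b - a + 1) = eps * (b - a) + eps by rewrite mulrDr mulr1.
rewrite lerD2l; exact: ltW.
Qed.
Lemma ac_comp (R : realType) (a b : R) (g q : R -> R) :
  abs_cont_on a b g -> (forall x y, `|q x - q y| <= `|x - y|) ->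
  abs_cont_on a b (fun t => q (g t) + t).
Proof.
move=> gAC ql e e0.
have [d d0 Hd] := gAC (e / 2) (divr_gt0 e0 (ltr0n R 2)).
exists (Num.min d (e / 2)); first by rewrite lt_min d0 divr_gt0.
move=> p u v H1 H2 Hs.
have Hs1 : \sum_(i < p) (v i - u i) < d by apply: lt_le_trans Hs _; rewrite ge_min lexx.
have Hs2 : \sum_(i < p) (v i - u i) < e / 2 by apply: lt_le_trans Hs _; rewrite ge_min lexx orbT.
have Hg := Hd p u v H1 H2 Hs1.
apply: (le_lt_trans (y := \sum_(i < p) `|g (v i) - g (u i)| + \sum_(i < p) (v i - u i))).
  rewrite -big_split /=; apply: ler_sum => i _.
  have [h1 [h2 h3]] := H1 i.
  have -> : q (g (v i)) + v i - (q (g (u i)) + u i) = (q (g (v i)) - q (g (u i))) + (v i - u i) by lra.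
  apply: (le_trans (ler_normD _ _)); apply: lerD.
    exact: ql.
  by rewrite ger0_norm // subr_ge0.
have : e = e / 2 + e / 2 by rewrite -splitr.
move=> ->; exact: ltrD.
Qed.
Lemma ac_unif (R : realType) (a b : R) (g : R -> R) :
  abs_cont_on a b g -> forall e, 0 < e -> exists2 d : R, 0 < d &
    forall x y, a <= x -> x <= b -> a <= y -> y <= b -> `|x - y| < d -> `|g x - g y| < e.
Proof.
move=> gAC e e0; have [d d0 Hd] := gAC e e0; exists d => // x y ax xb ay yb xy.
wlog xy' : x y ax xb ay yb xy / x <= y.
  move=> W; have [h|h] := leP x y; first exact: W.
  by rewrite distrC; apply: W => //; [rewrite distrC | exact: ltW].
have H : \sum_(i < 1) `|g ((fun=> y) i) - g ((fun=> x) i)| < e.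
  apply: (Hd 1%N (fun=> x) (fun=> y)).
  - by move=> i; split => //; split.
  - by move=> i j; rewrite !ord1 eqxx.
  - by rewrite big_ord1; move: xy; rewrite distrC ger0_norm // subr_ge0.
by move: H; rewrite big_ord1 distrC.
Qed.

Lemma max_lip (R : realType) (x y t0 : R) : `|Num.max x t0 - Num.max y t0| <= `|x - y|.
Proof.
have h1 := ler_norm (x - y); have h2 := ler_norm (y - x); rewrite distrC in h2.
rewrite ler_norml; apply/andP.
rewrite /Num.max; case: ifP => /= a1; case: ifP => /= a2; split; lra.
Qed.
Lemma cont_ext (R : realType) (g : R -> R) t0 :
  (forall b, t0 <= b -> abs_cont_on t0 b g) -> continuous (fun x => g (Num.max x t0)).
Proof.
move=> hAC x; apply/cvgrPdist_lt => e e0.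
have tm : forall z : R, t0 <= Num.max z t0 by move=> z; rewrite le_max lexx orbT.
have M0 : t0 <= Num.max x t0 + 1 by rewrite (le_trans (tm x)) // lerDl.
have [d d0 Hd] := ac_unif (hAC _ M0) e0.
apply/nbhs_ballP; exists (Num.min d 1); first by rewrite /= lt_min d0 ltr01.
move=> y /=; rewrite /ball /= lt_min => /andP[yd y1].
have hl := max_lip x y t0.
apply: Hd => //.
- by rewrite lerDl.
- have := ler_norm (Num.max y t0 - Num.max x t0); rewrite distrC.
  move=> h; have := le_trans h hl; lra.
- exact: le_lt_trans hl yd.
Qed.
Definition qf (R : realType) (d x : R) := `| `|x| - d |.
Definition sf (R : realType) (d x : R) := sgn x * sgn (`|x| - d).

Lemma qf_lip (R : realType) (d x y : R) : `|qf d x - qf d y| <= `|x - y|.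
Proof.
rewrite /qf; apply: (le_trans (ler_dist_dist _ _)).
have -> : `|x| - d - (`|y| - d) = `|x| - `|y| by lra.
exact: ler_dist_dist.
Qed.

Lemma qf_loc (R : realType) (d x y : R) : 0 < d -> x <> 0 -> `|x| <> d ->
  `|y - x| < Num.min `|x| `| `|x| - d| -> qf d y - qf d x = sf d x * (y - x).
Proof.
move=> d0 x0 xd; rewrite lt_min => /andP[h1 h2].
rewrite /qf /sf /sgn.
have [xp|xn] := leP 0 x.
  have xp' : 0 < x by rewrite lt_neqAle eq_sym; apply/andP; split => //; exact/eqP.
  rewrite (ger0_norm xp) in h2 h1 xd *.
  move: h1; rewrite ltr_norml => /andP[h1 h1'].
  have yp : 0 <= y by lra.
  rewrite (ger0_norm yp) mul1r.
  have [xd'|xd'] := leP 0 (x - d).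
    move: h2; rewrite (ger0_norm xd') ltr_norml => /andP[h2 h2'].
    rewrite ger0_norm; lra.
  move: h2; rewrite (ltr0_norm xd') ltr_norml => /andP[h2 h2'].
  rewrite ltr0_norm; lra.
rewrite (ltr0_norm xn) in h2 h1 xd *.
move: h1; rewrite ltr_norml => /andP[h1 h1'].
have yn : y < 0 by lra.
rewrite (ltr0_norm yn).
have [xd'|xd'] := leP 0 (- x - d).
  move: h2; rewrite (ger0_norm xd') ltr_norml => /andP[h2 h2'].
  rewrite ger0_norm; lra.
move: h2; rewrite (ltr0_norm xd') ltr_norml => /andP[h2 h2'].
rewrite ltr0_norm; lra.
Qed.
Lemma le_eps (R : realType) (x y : R) : (forall e, 0 < e -> x <= y + e) -> x <= y.
Proof.
move=> H; rewrite leNgt; apply/negP => yx.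
have := H ((x - y) / 2); rewrite divr_gt0 ?subr_gt0 // => /(_ isT); lra.
Qed.

Lemma comp_S (R : realType) m (z : 'I_m -> R) (j : 'I_m) : Defs.comp z (val j).+1 = z j.
Proof. by rewrite /Defs.comp /= valK. Qed.

Lemma sgn_abs (R : realType) (x : R) : `|sgn x| = 1.
Proof. by rewrite /sgn; case: ifP => _; rewrite ?normrN normr1. Qed.

Lemma sgn_same (R : realType) (x y : R) : `|y - x| < `|x| -> sgn y = sgn x.
Proof.
rewrite /sgn ltr_norml => /andP[h1 h2].
have [xp|xn] := leP 0 x.
  rewrite ger0_norm // in h1 h2; case: ifP => // /negbT; rewrite -ltNge; lra.
rewrite ltr0_norm // in h1 h2; case: ifP => //; lra.
Qed.

Lemma sf_same (R : realType) (d x y : R) :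
  `|y - x| < Num.min `|x| `| `|x| - d| -> sf d y = sf d x.
Proof.
rewrite lt_min => /andP[h1 h2]; rewrite /sf (sgn_same h1); congr (_ * _).
apply: sgn_same; apply: le_lt_trans h2.
have -> : `|y| - d - (`|x| - d) = `|y| - `|x| by lra.
exact: ler_dist_dist.
Qed.

Lemma euclid_comp (R : realType) m (x y : 'I_m -> R) (j : 'I_m) :
  `|x j - y j| <= euclid_dist x y.
Proof.
rewrite /euclid_dist -sqrtr_sqr ler_wsqrtr //.
rewrite (bigD1 j) //= lerDl; apply: sumr_ge0 => i _; exact: sqr_ge0.
Qed.

Lemma sfun_abs (R : realType) m (d : nat -> R) (y : 'I_m -> R) i : `|s_fun d y i| = 1.
Proof. by rewrite /s_fun normrM !sgn_abs mulr1. Qed.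

Lemma sgn_sq (R : realType) (x : R) : sgn x * sgn x = 1.
Proof. by rewrite /sgn; case: ifP => _; rewrite ?mulrNN mulr1. Qed.
Lemma sfun_sq (R : realType) m (d : nat -> R) (y : 'I_m -> R) i : s_fun d y i * s_fun d y i = 1.
Proof. by rewrite /s_fun mulrACA !sgn_sq mulr1. Qed.

Lemma rhs_bound (R : realType) m (k d : nat -> R) (y : 'I_m -> R) (j : 'I_m) :
  (if (1 < j.+1)%N then 1 else 0) + (if (j.+1 < m)%N then k j.+2 else 0) <= k j.+1 ->
  ((j.+1 < m)%N -> 0 <= k j.+2) ->
  s_fun d y j.+1 * rhs k d y j <= -1.
Proof.
move=> hk hk0; rewrite /rhs /=.
set a := s_fun d y j; set s := s_fun d y j.+1; set c := s_fun d y j.+2.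
have ss : s * s = 1 by exact: sfun_sq.
have sa : s * a <= 1 by apply: le_trans (ler_norm _) _; rewrite normrM /s /a !sfun_abs mulr1.
have sc : s * c <= 1 by apply: le_trans (ler_norm _) _; rewrite normrM /s /c !sfun_abs mulr1.
rewrite mulrDr mulrBr.
have -> : s * ((k j.+1 + 1) * s) = k j.+1 + 1 by rewrite mulrCA ss mulr1.
move: hk; case: ifP => h1; case: ifP => h2 hk.
- have := hk0 h2 => k0.
  have : s * (k j.+2 * c) <= k j.+2 by rewrite mulrCA -{2}(mulr1 (k j.+2)) ler_wpM2l.
  lra.
- rewrite mulr0; lra.
- rewrite mulr0; have := hk0 h2 => k0.
  have : s * (k j.+2 * c) <= k j.+2 by rewrite mulrCA -{2}(mulr1 (k j.+2)) ler_wpM2l.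
  lra.
- rewrite !mulr0; lra.
Qed.
Lemma k_pos (R : realType) (n : nat) (k : nat -> R) :
  (forall i : nat, (2 <= i <= n - 2)%N -> k i.+1 + 1 <= k i) -> 1 <= k n.-1 ->
  forall j, (2 <= j <= n.-1)%N -> 1 <= k j.
Proof.
move=> hki hkn.
suff H : forall r j, (n.-1 - j)%N = r -> (2 <= j <= n.-1)%N -> 1 <= k j.
  by move=> j hj; exact: (H _ j erefl hj).
elim=> [|r IH] j hr /andP[j2 jn].
  by have -> : j = n.-1 by lia.
have h1 := hki j ltac:(apply/andP; split; lia).
have h2 := IH j.+1 ltac:(lia) ltac:(apply/andP; split; lia).
lra.
Qed.

Lemma gain (R : realType) (n : nat) (k : nat -> R) : (3 <= n)%N ->
  k 2%N <= k 1%N ->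
  (forall i : nat, (2 <= i <= n - 2)%N -> k i.+1 + 1 <= k i) -> 1 <= k n.-1 ->
  forall j : 'I_n.-1,
  ((if (1 < j.+1)%N then 1 else 0) + (if (j.+1 < n.-1)%N then k j.+2 else 0) <= k j.+1)
  /\ ((j.+1 < n.-1)%N -> 0 <= k j.+2).
Proof.
move=> hn hk1 hki hkn j.
have jl := ltn_ord j.
have kp := k_pos hki hkn.
split; last first.
  by move=> h; apply: le_trans (kp j.+2 ltac:(apply/andP; split; lia)); exact: ler01.
case: ifP => h1; case: ifP => h2.
- have := hki j.+1 ltac:(apply/andP; split; lia); lra.
- have -> : j.+1 = n.-1 by lia.
  by rewrite addr0.
- have -> : (nat_of_ord j) = 0%N by lia.
  by rewrite add0r.
- lia.
Qed.
Lemma sf_abs (R : realType) (d x : R) : `|sf d x| = 1.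
Proof. by rewrite /sf normrM !sgn_abs mulr1. Qed.

Lemma kras_bound (R : realType) m (k d : nat -> R) (z v : 'I_m -> R) (j : 'I_m) :
  (if (1 < j.+1)%N then 1 else 0) + (if (j.+1 < m)%N then k j.+2 else 0) <= k j.+1 ->
  ((j.+1 < m)%N -> 0 <= k j.+2) ->
  z j <> 0 -> `|z j| <> d j.+1 ->
  krasowskii (rhs k d) z v -> sf (d j.+1) (z j) * v j <= -1.
Proof.
move=> c1 c2 x0 xd Kv.
set x := z j; set dj := d j.+1; set sig := sf dj x.
have del0 : 0 < Num.min `|x| `| `|x| - dj|.
  rewrite lt_min !normr_gt0; apply/andP; split; apply/eqP => // h.
  by apply: xd; apply/eqP; rewrite -subr_eq0; apply/eqP.
have := Kv _ del0.
move=> Kv'; apply: le_eps => e e0.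
have [y [Hy dy]] := Kv' e e0.
have ey := le_lt_trans (euclid_comp v y j) dy.
have Hsy : sig * y j <= -1.
  case: Hy => p [w [a [w0 [w1 [aA yj]]]]].
  rewrite yj mulr_sumr.
  have -> : -1 = \sum_(i < p) w i * (-1) :> R by rewrite -mulr_suml w1 mul1r.
  apply: ler_sum => i _; rewrite mulrCA; apply: ler_wpM2l => //.
  have [b Hb <-] := aA i.
  have bj : `|b j - x| < Num.min `|x| `| `|x| - dj|.
    by apply: le_lt_trans Hb; exact: euclid_comp.
  have -> : sig = s_fun d b j.+1.
    by rewrite /s_fun comp_S /sig -(sf_same bj).
  exact: rhs_bound.
have : sig * v j - sig * y j <= e.
  rewrite -mulrBr; apply: le_trans (ler_norm _) _.
  by rewrite normrM sf_abs mul1r ltW.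
lra.
Qed.
Lemma Rp (R : realType) (g : R -> R) (N : set R) (t0 dj : R) :
  0 < dj ->
  (forall a b, t0 <= a -> a <= b -> abs_cont_on a b g) ->
  (@lebesgue_measure R).-negligible N ->
  (forall t, t0 < t -> ~ N t -> exists w, is_derive t (1:R) g w /\
      (g t <> 0 -> `|g t| <> dj -> sf dj (g t) * w <= -1)) ->
  forall s t, t0 <= s -> s <= t ->
  (forall u, s < u -> u < t -> g u <> 0 /\ `|g u| <> dj) ->
  qf dj (g t) <= qf dj (g s) - (t - s).
Proof.
move=> dj0 Hac nN Hd s t t0s st Hout.
suff : qf dj (g t) + t <= qf dj (g s) + s by lra.
have gac := Hac s t t0s st.
apply: (core (h := fun x => qf dj (g x) + x) st (ac_comp gac (@qf_lip R dj)) nN).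
move=> tau st1 st2 nt e e0.
have [w [Dw Sw]] := Hd tau ltac:(lra) nt.
have [g0 gd] := Hout tau st1 st2.
have Sw' := Sw g0 gd.
set rho := Num.min `|g tau| `| `|g tau| - dj|.
have rho0 : 0 < rho.
  rewrite lt_min !normr_gt0; apply/andP; split; apply/eqP => // h.
  by apply: gd; apply/eqP; rewrite -subr_eq0; apply/eqP.
have [ds ds0 Hs] := straddle Dw e0.
have [dc dc0 Hc] := ac_unif gac rho0.
pose D := Num.min ds (Num.min dc (Num.min (tau - s) (t - tau))).
have Dds : D <= ds by rewrite /D ge_min lexx.
have Ddc : D <= dc by rewrite /D !ge_min lexx orbT.
have Dts : D <= tau - s by rewrite /D !ge_min lexx !orbT.
have Dtt : D <= t - tau by rewrite /D !ge_min lexx !orbT.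
exists D; first by rewrite /D !lt_min ds0 dc0 !subr_gt0 st1 st2.
move=> u v h1 h2 h3 h4.
have Hsuv := Hs u v ltac:(lra) h2 h3 ltac:(lra).
have Hcu : `|g u - g tau| < rho.
  apply: Hc; try lra; rewrite ler0_norm; lra.
have Hcv : `|g v - g tau| < rho.
  apply: Hc; try lra; rewrite ger0_norm; lra.
have Qu := qf_loc dj0 g0 gd Hcu.
have Qv := qf_loc dj0 g0 gd Hcv.
set sig := sf dj (g tau) in Qu Qv Sw'.
have A : sig * (g v - g u - w * (v - u)) <= e * (v - u).
  apply: le_trans (ler_norm _) _; by rewrite normrM sf_abs mul1r.
have B : sig * w * (v - u) <= - (v - u).
  have vu : 0 <= v - u by lra.
  nra.
have : qf dj (g v) - qf dj (g u) = sig * (g v - g u - w * (v - u)) + sig * w * (v - u).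
  have -> : qf dj (g v) - qf dj (g u) = (qf dj (g v) - qf dj (g tau)) - (qf dj (g u) - qf dj (g tau)) by lra.
  rewrite Qu Qv; lra.
lra.
Qed.
Lemma last_time (R : realType) (phi : R -> R) (s t c : R) : continuous phi ->
  s <= t -> phi s <= c ->
  exists u, [/\ s <= u, u <= t, phi u <= c & forall w, u < w -> w <= t -> c < phi w].
Proof.
move=> cphi st hs.
pose A := [set x | s <= x <= t /\ phi x <= c].
have As : A s by split => //; rewrite lexx st.
have hA : has_sup A by split; [exists s | exists t => x [/andP[_ ->]]].
have su : s <= sup A by exact: sup_upper_bound.
have ut : sup A <= t by apply: ge_sup; [exists s | move=> x [/andP[_ ->]]].
exists (sup A); split => //.
- rewrite leNgt; apply/negP => hc.
  have := cphi (sup A); move/cvgrPdist_lt => /(_ (phi (sup A) - c)).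
  rewrite subr_gt0 => /(_ hc) /nbhs_ballP[del del0 Hb].
  have [x Ax xl] := sup_adherent del0 hA.
  have xu : x <= sup A by exact: sup_upper_bound.
  have := Hb x; rewrite /ball /= => H.
  case: Ax => _ px.
  have := H ltac:(rewrite ger0_norm; lra).
  rewrite ltr_norml => /andP[_ h2]; lra.
- move=> w uw wt; rewrite ltNge; apply/negP => pw.
  have : w <= sup A by apply: sup_upper_bound => //; split => //; apply/andP; split; lra.
  lra.
Qed.

Lemma first_zero (R : realType) (psi : R -> R) (s t w0 : R) : continuous psi ->
  s <= w0 -> w0 <= t -> psi w0 = 0 ->
  exists u, [/\ s <= u, u <= t, psi u = 0 & forall w, s <= w -> w < u -> psi w <> 0].
Proof.
move=> cpsi sw wt hw.
pose A := [set x | s <= x <= t /\ psi x = 0].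
have Aw : A w0 by split => //; rewrite sw wt.
have lA : has_lbound A by exists s => x [/andP[-> _]].
have hA : has_inf A by split; [exists w0 | exact: lA].
have su : s <= inf A by apply: lb_le_inf; [exists w0 | move=> x [/andP[-> _]]].
have ut : inf A <= w0 by exact: ge_inf.
exists (inf A); split => //; first lra.
- apply/eqP; apply: contraT => hc.
  have hc' : 0 < `|psi (inf A)| by rewrite normr_gt0.
  have := cpsi (inf A); move/cvgrPdist_lt => /(_ _ hc') /nbhs_ballP[del del0 Hb].
  have [x Ax xl] := inf_adherent del0 hA.
  have xu : inf A <= x by exact: ge_inf.
  have := Hb x; rewrite /ball /= => H.
  case: Ax => _ px.
  have := H ltac:(rewrite ler0_norm; lra).
  by rewrite px subr0 ltxx.
- move=> w sw' wu pw.
  have : inf A <= w by apply: ge_inf => //; split => //; apply/andP; split; lra.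
  lra.
Qed.
Lemma qf_cont (R : realType) (G : R -> R) (dj : R) : continuous G ->
  continuous (fun x => qf dj (G x)).
Proof.
move=> cG x; apply/cvgrPdist_lt => e e0.
have := cG x; move/cvgrPdist_lt => /(_ e e0).
apply: filterS => y H; exact: le_lt_trans (qf_lip _ _ _) H.
Qed.

Lemma qf0 (R : realType) (dj : R) : 0 < dj -> qf dj 0 = dj.
Proof. by move=> d0; rewrite /qf normr0 sub0r normrN gtr0_norm. Qed.

Lemma qf_ge0 (R : realType) (dj x : R) : 0 <= qf dj x.
Proof. exact: normr_ge0. Qed.

Lemma qf_nd (R : realType) (dj x : R) : 0 < qf dj x -> `|x| <> dj.
Proof. by move=> h hx; move: h; rewrite /qf hx subrr normr0 ltxx. Qed.

Lemma mono (R : realType) (g : R -> R) (N : set R) (t0 dj : R) :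
  0 < dj ->
  (forall a b, t0 <= a -> a <= b -> abs_cont_on a b g) ->
  (@lebesgue_measure R).-negligible N ->
  (forall t, t0 < t -> ~ N t -> exists w, is_derive t (1:R) g w /\
      (g t <> 0 -> `|g t| <> dj -> sf dj (g t) * w <= -1)) ->
  forall s t, t0 <= s -> s <= t -> qf dj (g t) <= qf dj (g s).
Proof.
move=> dj0 Hac nN Hd s t t0s st.
have hR := Rp dj0 Hac nN Hd.
have tm : forall x, t0 <= x -> Num.max x t0 = x.
  by move=> x hx; apply/max_idPl.
pose G := fun x => g (Num.max x t0).
have cG : continuous G.
  by apply: cont_ext => b hb; exact: Hac (lexx t0) hb.
have Gx : forall x, t0 <= x -> G x = g x by move=> x hx; rewrite /G tm.
rewrite leNgt; apply/negP => hst.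
have [u1 [su1 u1t pu1 Hu1]] := last_time (@qf_cont _ G dj cG) st (le_refl (qf dj (G s))).
rewrite !Gx // in pu1; last lra.
have u1t' : u1 < t.
  rewrite lt_neqAle u1t andbT; apply/eqP => e; move: pu1; rewrite e; lra.
have Hu1' : forall w, u1 < w -> w <= t -> qf dj (g s) < qf dj (g w).
  by move=> w h1 h2; have := Hu1 w h1 h2; rewrite !Gx //; lra.
have [[w [w1 w2 w3]]|nz] := pselect (exists w, [/\ u1 < w, w < t & g w = 0]).
  have [u3 [u13 u3t gu3 Hu3]] := first_zero cG (ltW w1) (ltW w2) ltac:(by rewrite Gx //; lra).
  rewrite Gx in gu3; last lra.
  have qw := Hu1' w w1 (ltW w2).
  rewrite w3 qf0 // in qw.
  have u13' : u1 < u3.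
    rewrite lt_neqAle u13 andbT; apply/eqP => e; move: pu1; rewrite e gu3 qf0 //; lra.
  have := hR u1 u3 ltac:(lra) u13 _.
  have qu3 := Hu1' u3 u13' u3t.
  rewrite gu3 qf0 // in qu3 *.
  move=> H; have : dj <= qf dj (g u1) - (u3 - u1).
    apply: H => u h1 h2; split.
      by have := Hu3 u ltac:(lra) h2; rewrite Gx //; lra.
    apply: qf_nd; have := Hu1' u h1 ltac:(lra); have := qf_ge0 dj (g s); lra.
  lra.
have := hR u1 t ltac:(lra) u1t _.
move=> H; have : qf dj (g t) <= qf dj (g u1) - (t - u1).
  apply: H => u h1 h2; split.
    by move=> gu; apply: nz; exists u; split.
  apply: qf_nd; have := Hu1' u h1 ltac:(lra); have := qf_ge0 dj (g s); lra.
lra.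
Qed.
Lemma abs_contf (R : realType) (G : R -> R) : continuous G -> continuous (fun x => `|G x|).
Proof.
move=> cG x; apply/cvgrPdist_lt => e e0.
have := cG x; move/cvgrPdist_lt => /(_ e e0).
apply: filterS => y H; exact: le_lt_trans (ler_dist_dist _ _) H.
Qed.

Lemma qf_eq0 (R : realType) (dj x : R) : qf dj x = 0 -> `|x| = dj.
Proof. by move/eqP; rewrite /qf normr_eq0 subr_eq0 => /eqP. Qed.

Lemma coord_event (R : realType) (g : R -> R) (N : set R) (t0 dj : R) :
  0 < dj ->
  (forall a b, t0 <= a -> a <= b -> abs_cont_on a b g) ->
  (@lebesgue_measure R).-negligible N ->
  (forall t, t0 < t -> ~ N t -> exists w, is_derive t (1:R) g w /\
      (g t <> 0 -> `|g t| <> dj -> sf dj (g t) * w <= -1)) ->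
  exists T, forall t, T <= t -> g t = 0 \/ `|g t| = dj.
Proof.
move=> dj0 Hac nN Hd.
have hR := Rp dj0 Hac nN Hd.
have hM := mono dj0 Hac nN Hd.
have tm : forall x, t0 <= x -> Num.max x t0 = x by move=> x hx; apply/max_idPl.
pose G := fun x => g (Num.max x t0).
have cG : continuous G by apply: cont_ext => b hb; exact: Hac (lexx t0) hb.
have Gx : forall x, t0 <= x -> G x = g x by move=> x hx; rewrite /G tm.
have [[t1 [t01 q1]]|nA] := pselect (exists t1, t0 <= t1 /\ qf dj (g t1) < dj).
  exists (t1 + dj) => t ht; right.
  have [[u [u1 u2 u3]]|nu] := pselect (exists u, [/\ t1 <= u, u <= t & qf dj (g u) = 0]).
    apply: qf_eq0; apply/eqP; rewrite eq_le qf_ge0 andbT.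
    by rewrite -u3; apply: hM; lra.
  exfalso.
  have : qf dj (g t) <= qf dj (g t1) - (t - t1).
    apply: hR; try lra.
    move=> u h1 h2; split.
      move=> gu; have := hM t1 u t01 ltac:(lra); rewrite gu qf0 //; lra.
    apply: qf_nd; rewrite lt_neqAle qf_ge0 andbT eq_sym; apply/eqP => hq.
    by apply: nu; exists u; split => //; lra.
  have := qf_ge0 dj (g t); lra.
have nA' : forall t1, t0 <= t1 -> dj <= qf dj (g t1).
  move=> t1 h; rewrite leNgt; apply/negP => h'; apply: nA; by exists t1.
have [[t1 [t01 g1]]|nB] := pselect (exists t1, t0 <= t1 /\ g t1 = 0).
  exists t1 => t ht; left.
  have qt : qf dj (g t) = dj.
    apply/eqP; rewrite eq_le nA' ?andbT; last lra.
    by have := hM t1 t t01 ht; rewrite g1 qf0.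
  apply: contrapT => gt0.
  have gt2 : `|g t| = 2 * dj.
    move: qt; rewrite /qf.
    have [h|h] := leP dj `|g t|.
      by rewrite ger0_norm ?subr_ge0 //; lra.
    rewrite ltr0_norm ?subr_lt0 // => h'.
    have : `|g t| = 0 by lra.
    by move/eqP; rewrite normr_eq0 => /eqP.
  have := @IVT R (fun x => `|G x|) t1 t dj ht.
  case.
  - exact: continuous_subspaceT (abs_contf cG).
  - rewrite !Gx; try lra.
    rewrite g1 normr0 gt2.
    by apply/andP; split; [rewrite ge_min; apply/orP; left | rewrite le_max; apply/orP; right]; lra.
  move=> c; rewrite in_itv /= => /andP[c1 c2].
  rewrite Gx; last lra.
  move=> gc; have := nA' c ltac:(lra); rewrite /qf gc subrr normr0; lra.
exists t0 => t ht; exfalso.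
have Q0 := qf_ge0 dj (g t0).
have := hR t0 (t0 + qf dj (g t0) + 1) (lexx t0) ltac:(lra).
move=> H; have : qf dj (g (t0 + qf dj (g t0) + 1)) <= qf dj (g t0) - (t0 + qf dj (g t0) + 1 - t0).
  apply: H => u h1 h2; split.
    by move=> gu; apply: nB; exists u; split => //; lra.
  apply: qf_nd; have := nA' u ltac:(lra); lra.
have := qf_ge0 dj (g (t0 + qf dj (g t0) + 1)); lra.
Qed.

Theorem theorem1 (R : realType) (n : nat) (k d : nat -> R)
  (hn : (3 <= n)%N)
  (hd : forall i : nat, (1 <= i <= n.-1)%N -> 0 < d i)
  (hk1 : k 2%N <= k 1%N)
  (hki : forall i : nat, (2 <= i <= n - 2)%N -> k i.+1 + 1 <= k i)
  (hkn : 1 <= k n.-1)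
  (t0 : R) (z : R -> ('I_n.-1 -> R))
  (hz : krasowskii_solution (@rhs R n.-1 k d) t0 z) :
  forall e : R, 0 < e -> exists T : R, forall t : R, T <= t ->
    exists y, @Eset R n.-1 d y /\ euclid_dist (z t) y < e.
Proof.
move=> e e0.
case: hz => hAC [N [nN HN]].
have HT : forall j : 'I_n.-1, exists T : R, forall t, T <= t ->
    z t j = 0 \/ `|z t j| = d j.+1.
  move=> j.
  have dj0 : 0 < d j.+1 by apply: hd; have := ltn_ord j; lia.
  have Hac' : forall a b, t0 <= a -> a <= b -> abs_cont_on a b (fun t => z t j).
    by move=> a b ha hb; exact: hAC.
  have Hd' : forall t, t0 < t -> ~ N t -> exists w, is_derive t (1:R) (fun s => z s j) w /\
      (z t j <> 0 -> `|z t j| <> d j.+1 -> sf (d j.+1) (z t j) * w <= -1).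
    move=> t ht nt; have [v [Dv Kv]] := HN t ht nt.
    exists (v j); split => // h1 h2.
    have [c1 c2] := gain hn hk1 hki hkn j.
    exact: kras_bound c1 c2 h1 h2 Kv.
  exact: (coord_event dj0 Hac' nN Hd').
have [Tf HTf] := choice HT.
exists (\sum_(j < n.-1) `|Tf j|) => t ht.
exists (z t); split.
  rewrite /Eset /=; apply: big1 => j _.
  have Tj : Tf j <= t.
    apply: le_trans ht; apply: le_trans (ler_norm _) _.
    rewrite (bigD1 j) //= lerDl; apply: sumr_ge0 => i _; exact: normr_ge0.
  have [->|->] := HTf j t Tj.
    by rewrite normr0 mul0r.
  by rewrite subrr normr0 mulr0.
rewrite /euclid_dist big1 ?sqrtr0 // => i _.
have -> : z t i - z t i = 0 by apply/eqP; rewrite subr_eq0.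
by rewrite expr2 mul0r.
Qed.
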